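(* Let $Q$ be a quantale, $S$ a sup-lattice, and $r:Q\to\mathcal{Q}(S)$ a representation of $Q$ on $S$; write $x\cdot a=r(a)(x)$ for $x\in S$, $a\in Q$. Then: (1) the representation is irreducible if and only if, for all $x\in S$, the condition $x\cdot 1_Q\le x$ implies $x=0_S$ or $x=1_S$; (2) if the representation is strong, then it is irreducible; (3) if $Q$ is unital and the representation is pre-unital, then it is irreducible if and only if it is strong.
   Context: A sup-lattice is a complete lattice; a sup-lattice homomorphism preserves arbitrary joins. A quantale is a sup-lattice $Q$ with an associative multiplication $\cdot$ distributing over arbitrary joins in each variable; $0$ and $1$ (or $1_Q$) denote its bottom and top. $Q$ is unital if it has an element $e$ with $e\cdot a=a=a\cdot e$ for all $a$. A quantale homomorphism is a join-preserving map preserving multiplication. For a sup-lattice $S$, $\mathcal{Q}(S)$ is the unital quantale of all sup-lattice endomorphisms of $S$, with pointwise joins, multiplication $f\cdot g=g\circ f$, and unit $\mathrm{id}_S$. A representation of $Q$ on $S$ is a quantale homomorphism $r:Q\to\mathcal{Q}(S)$. It is irreducible if the only principal ideals $I={\downarrow}x\subseteq S$ with $I\cdot Q\subseteq I$ are $\{0_S\}$ and $S$. It is strong if $r(1_Q)$ is the top of $\mathcal{Q}(S)$ (equivalently $x\cdot 1_Q=1_S$ for all $x\neq 0_S$). For unital $Q$, it is pre-unital if $\mathrm{id}_S\le r(e)$. *)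

(* Defs.v *)
Record SupLattice := {
  sl_car :> Type;
  sl_le : sl_car -> sl_car -> Prop;
  sl_refl : forall x, sl_le x x;
  sl_antisym : forall x y, sl_le x y -> sl_le y x -> x = y;
  sl_trans : forall x y z, sl_le x y -> sl_le y z -> sl_le x z;
  sl_sup : (sl_car -> Prop) -> sl_car;
  sl_sup_ub : forall (A : sl_car -> Prop) x, A x -> sl_le x (sl_sup A);
  sl_sup_least : forall (A : sl_car -> Prop) y,
      (forall x, A x -> sl_le x y) -> sl_le (sl_sup A) y
}.

Arguments sl_le {s} _ _.
Arguments sl_sup {s} _.

Definition sl_bot (S : SupLattice) : S := sl_sup (fun _ : S => False).
Definition sl_top (S : SupLattice) : S := sl_sup (fun _ : S => True).

Definition img {A B : Type} (f : A -> B) (X : A -> Prop) : B -> Prop :=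
  fun y => exists x, X x /\ y = f x.

Definition sup_preserving {S T : SupLattice} (f : S -> T) : Prop :=
  forall A : S -> Prop, f (sl_sup A) = sl_sup (img f A).

Record Quantale := {
  q_sl :> SupLattice;
  q_mul : q_sl -> q_sl -> q_sl;
  q_assoc : forall a b c, q_mul a (q_mul b c) = q_mul (q_mul a b) c;
  q_distr_l : forall a (A : q_sl -> Prop),
      q_mul a (sl_sup A) = sl_sup (img (q_mul a) A);
  q_distr_r : forall a (A : q_sl -> Prop),
      q_mul (sl_sup A) a = sl_sup (img (fun b => q_mul b a) A)
}.

Arguments q_mul {q} _ _.

Definition is_unit (Q : Quantale) (e : Q) : Prop :=
  forall a : Q, q_mul e a = a /\ q_mul a e = a.

(** A representation r : Q -> Q(S), where Q(S) is the quantale of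
    sup-lattice endomorphisms of S with pointwise joins and
    multiplication f . g = g o f.  We write x . a = r a x. *)
Definition is_representation (Q : Quantale) (S : SupLattice)
    (r : Q -> S -> S) : Prop :=
  (forall a : Q, sup_preserving (r a)) /\
  (* r preserves arbitrary joins (joins in Q(S) are pointwise) *)
  (forall (A : Q -> Prop) (x : S),
      r (sl_sup A) x = sl_sup (img (fun a => r a x) A)) /\
  (* r preserves multiplication: r (a b) = r a . r b = r b o r a *)
  (forall (a b : Q) (x : S), r (q_mul a b) x = r b (r a x)).

(** irreducible: the only principal ideals I = down x with I.Q <= I
    are {0_S} and S *)
Definition irreducible (Q : Quantale) (S : SupLattice)
    (r : Q -> S -> S) : Prop :=
  forall x : S,
    (forall (y : S) (a : Q), sl_le y x -> sl_le (r a y) x) ->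
    (forall y : S, sl_le y x <-> y = sl_bot S) \/
    (forall y : S, sl_le y x <-> True).

(** strong: r (1_Q) is the top element of Q(S), i.e. it lies above
    (pointwise order) every sup-lattice endomorphism of S *)
Definition strong (Q : Quantale) (S : SupLattice)
    (r : Q -> S -> S) : Prop :=
  forall f : S -> S, sup_preserving f ->
    forall x : S, sl_le (f x) (r (sl_top Q) x).

Definition pre_unital (Q : Quantale) (S : SupLattice)
    (r : Q -> S -> S) (e : Q) : Prop :=
  forall x : S, sl_le x (r e x).

(* Main.v *)
Require Import Defs.
From Stdlib Require Import Classical ClassicalEpsilon.

Lemma le_bot (S : SupLattice) (y : S) : sl_le (sl_bot S) y.
Proof. unfold sl_bot. apply sl_sup_least. intros x []. Qed.

Lemma le_top (S : SupLattice) (y : S) : sl_le y (sl_top S).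
Proof. unfold sl_top. apply sl_sup_ub. exact I. Qed.

Lemma sup_pair (S : SupLattice) (x y : S) : sl_le x y ->
  sl_sup (fun z => z = x \/ z = y) = y.
Proof.
  intros H. apply sl_antisym.
  - apply sl_sup_least. intros z [-> | ->]; [exact H | apply sl_refl].
  - apply sl_sup_ub. right; reflexivity.
Qed.

Lemma sp_mono (S T : SupLattice) (f : S -> T) : sup_preserving f ->
  forall x y, sl_le x y -> sl_le (f x) (f y).
Proof.
  intros HP x y H. pose proof (HP (fun z => z = x \/ z = y)) as E.
  rewrite sup_pair in E by exact H. rewrite E. apply sl_sup_ub.
  exists x. split; [left; reflexivity | reflexivity].
Qed.

Lemma sp_bot (S T : SupLattice) (f : S -> T) : sup_preserving f ->
  forall z, sl_le (f (sl_bot S)) z.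
Proof.
  intros HP z. unfold sl_bot. rewrite HP. apply sl_sup_least.
  intros w [v [[] _]].
Qed.

Lemma r_mono (Q : Quantale) (S : SupLattice) (r : Q -> S -> S)
  (hr : is_representation Q S r) :
  forall a b x, sl_le a b -> sl_le (r a x) (r b x).
Proof.
  destruct hr as [_ [H2 _]]. intros a b x H.
  pose proof (H2 (fun z => z = a \/ z = b) x) as E.
  rewrite sup_pair in E by exact H. rewrite E. apply sl_sup_ub.
  exists a. split; [left; reflexivity | reflexivity].
Qed.

Lemma part1 (Q : Quantale) (S : SupLattice) (r : Q -> S -> S)
  (hr : is_representation Q S r) :
  (irreducible Q S r <->
     (forall x : S, sl_le (r (sl_top Q) x) x ->
        x = sl_bot S \/ x = sl_top S)).
Proof.
  split.
  - intros Hi x Hx.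
    destruct (Hi x) as [H | H].
    + intros y a Hy. eapply sl_trans; [| exact Hx].
      eapply sl_trans.
      * apply (sp_mono _ _ (r a)); [apply (proj1 hr) | exact Hy].
      * apply (r_mono Q S r hr). apply le_top.
    + left. apply H. apply sl_refl.
    + right. apply sl_antisym; [apply le_top | apply H; exact I].
  - intros H x Hx.
    destruct (H x (Hx x (sl_top Q) (sl_refl _ x))) as [E | E]; subst x.
    + left. intros y; split.
      * intros Hy. apply sl_antisym; [exact Hy | apply le_bot].
      * intros ->. apply sl_refl.
    + right. intros y; split; [intros _; exact I | intros _; apply le_top].
Qed.

Definition indic (S : SupLattice) (y : S) : S :=
  match excluded_middle_informative (sl_le y (sl_bot S)) with
  | left _ => sl_bot S
  | right _ => sl_top S
  end.

Lemma indic_sp (S : SupLattice) : sup_preserving (indic S).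
Proof.
  intros A. unfold indic at 1.
  destruct (excluded_middle_informative (sl_le (sl_sup A) (sl_bot S))) as [h|h].
  - apply sl_antisym; [apply le_bot|]. apply sl_sup_least.
    intros z [w [Hw ->]]. unfold indic.
    destruct (excluded_middle_informative (sl_le w (sl_bot S))) as [_|h2].
    + apply sl_refl.
    + exfalso. apply h2. eapply sl_trans; [apply sl_sup_ub; exact Hw | exact h].
  - destruct (classic (exists w, A w /\ ~ sl_le w (sl_bot S))) as [[w [Hw Hn]]|Hn].
    + apply sl_antisym; [|apply le_top]. apply sl_sup_ub. exists w. split; [exact Hw|].
      unfold indic. destruct (excluded_middle_informative (sl_le w (sl_bot S))); tauto.
    + exfalso. apply h. apply sl_sup_least. intros w Hw.
      apply NNPP. intros Hc. apply Hn. exists w; auto.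
Qed.

Theorem proposition2p9 (Q : Quantale) (S : SupLattice) (r : Q -> S -> S)
  (hr : is_representation Q S r) :
  (irreducible Q S r <->
     (forall x : S, sl_le (r (sl_top Q) x) x ->
        x = sl_bot S \/ x = sl_top S)) /\
  (strong Q S r -> irreducible Q S r) /\
  (forall e : Q, is_unit Q e -> pre_unital Q S r e ->
     (irreducible Q S r <-> strong Q S r)).
Proof.
  assert (P1 := part1 Q S r hr).
  assert (P2 : strong Q S r -> irreducible Q S r).
  { intros Hs. apply P1. intros x Hx.
    destruct (classic (sl_le x (sl_bot S))) as [h|h].
    - left. apply sl_antisym; [exact h | apply le_bot].
    - right. apply sl_antisym; [apply le_top|].
      eapply sl_trans; [| exact Hx].
      pose proof (Hs (indic S) (indic_sp S) x) as Hf.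
      unfold indic in Hf.
      destruct (excluded_middle_informative (sl_le x (sl_bot S))); [tauto | exact Hf]. }
  split; [exact P1|]. split; [exact P2|].
  intros e He Hpu. split; [|exact P2].
  intros Hi f Hf x.
  destruct (classic (sl_le x (sl_bot S))) as [h|h].
  - assert (x = sl_bot S) as -> by (apply sl_antisym; [exact h | apply le_bot]).
    apply sp_bot; exact Hf.
  - set (z := r (sl_top Q) x).
    assert (Hz : sl_le (r (sl_top Q) z) z).
    { unfold z. rewrite <- (proj2 (proj2 hr)). apply (r_mono Q S r hr). apply le_top. }
    destruct (proj1 P1 Hi z Hz) as [E | E].
    + exfalso. apply h. rewrite <- E.
      eapply sl_trans; [apply Hpu|]. apply (r_mono Q S r hr). apply le_top.
    + rewrite E. apply le_top.
Qed.
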